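(* Assume the standing setup. Let $\lambda\in\mathbb R\setminus\overline{\mathrm{Supp}(\mu_X)}$ and let $\tilde{\mathbf g}\in(\mathbb R\setminus\{0\})^K$ be any solution of the QVE $\mathbf 1_K=\lambda\tilde{\mathbf g}-\tilde{\mathbf g}\odot\boldsymbol\Gamma_K(\tilde{\mathbf g}-\mathbf 1_K)$. Then $\tilde{\mathbf g}=\mathbf g(\lambda)$ if and only if the linear system $(\mathbf D_{\tilde{\mathbf g}}^{-2}-\boldsymbol\Gamma_K)\mathbf y=\mathbf 1_K$ admits a unique solution $\mathbf y$, and this solution satisfies $\mathbf y\succ\mathbf 0_K$.
   Context: Standing setup: $K\ge1$, $\boldsymbol\rho=(\rho_k)$ with $\rho_k\in(0,1)$, $\sum\rho_k=1$; $\mathbf S_K=(s_{kl})$ symmetric $K\times K$ with $s_{kl}>0$; $\boldsymbol\Gamma_K=\mathbf S_K\mathbf D_{\boldsymbol\rho}$ where $\mathbf D_{\mathbf v}$ is the diagonal matrix with diagonal $\mathbf v$. The random matrix $\mathbf X=\mathbf H\odot\boldsymbol\Sigma^{\odot1/2}-N^{-1/2}\mathrm{Diag}(\boldsymbol\Sigma\mathbf 1)$, where $[N]$ is split into consecutive blocks $B_1,\dots,B_K$ with $|B_k|/N\to\rho_k$, $\Sigma_{ij}=s_{kl}$ for $i\in B_k,j\in B_l$, $\mathbf H$ symmetric with independent standard Gaussian entries on and above the diagonal, $\odot$ Hadamard product. $\mu_X$ is the a.s. limiting spectral distribution of $\mathbf X/\sqrt N$. QVE: for $z\in\mathbb H_-=\{\Im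 z<0\}$, $\mathbf g(z)\in(\mathbb H_+)^K$ is the unique solution in $(\mathbb H_+)^K$ of $\mathbf 1_K=z\mathbf g-\mathbf g\odot\boldsymbol\Gamma_K(\mathbf g-\mathbf 1_K)$; $\sum_k\rho_kg_k$ is the Stieltjes transform $\int(z-\lambda)^{-1}d\mu_X$; $\mathbf g$ extends continuously to $\mathbb H_-\cup\mathbb R$ and analytically off $\mathrm{Supp}(\mu_X)$, and $\mathbf g(\lambda)$ for real $\lambda$ denotes this extension. $\succ$ is entrywise strict inequality. *)

(* Defs.v *)
From mathcomp Require Import all_boot all_order all_algebra.
From mathcomp Require Import all_classical all_reals all_analysis.
From mathcomp Require Import complex.
Import Order.TTheory GRing.Theory Num.Theory.
Import numFieldNormedType.Exports.

Set Implicit Arguments.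
Unset Strict Implicit.
Unset Printing Implicit Defensive.

Local Open Scope ring_scope.
Local Open Scope complex_scope.

Definition hadamard (F : pzRingType) m n (A B : 'M[F]_(m, n)) : 'M[F]_(m, n) :=
  map2_mx *%R A B.

Definition GammaK (R : pzRingType) K (S : 'M[R]_K) (rho : 'rV[R]_K) : 'M[R]_K :=
  S *m diag_mx rho.

Definition QVE (F : fieldType) K (G : 'M[F]_K) (z : F) (g : 'cV[F]_K) : Prop :=
  const_mx 1 = z *: g - hadamard g (G *m (g - const_mx 1)).

Definition cmx (R : rcfType) m n (A : 'M[R]_(m, n)) : 'M[R[i]]_(m, n) :=
  map_mx (fun x => x%:C) A.

Definition msupport (R : realType) (mu : probability R R) : set R :=
  [set x | forall e : R, 0 < e -> (0 < mu (ball x e))%E].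

(* Stieltjes transform  z |-> \int (z - x)^{-1} dmu(x)  (integral of a complex
   function = integral of its real part + i * integral of its imaginary part). *)
Definition stieltjes (R : realType) (mu : probability R R) (z : R[i]) : R[i] :=
  (Rintegral mu setT (fun x : R => complex.Re ((z - x%:C)^-1)))
  +i* (Rintegral mu setT (fun x : R => complex.Im ((z - x%:C)^-1))).

(* g(z) -> v as z -> lam within the open lower half-plane H_- (this defines
   the value at lam of the continuous extension of g to H_- \cup R). *)
Definition lim_lower (R : rcfType) K (g : R[i] -> 'cV[R[i]]_K) (lam : R)
    (v : 'cV[R[i]]_K) : Prop :=
  forall e : R, 0 < e -> exists2 d : R, 0 < d &
    forall z : R[i], complex.Im z < 0 -> ComplexField.Normc.normc (z - lam%:C) < d ->
      forall k : 'I_K, ComplexField.Normc.normc (g z k 0 - v k 0) < e.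

(* Main.v *)
Require Import Defs.
From mathcomp Require Import all_boot all_order all_algebra.
From mathcomp Require Import all_classical all_reals all_analysis.
From mathcomp Require Import complex.
From mathcomp Require Import ring lra.
Import Order.TTheory GRing.Theory Num.Theory.
Import numFieldNormedType.Exports.
Local Open Scope ring_scope.
Local Open Scope complex_scope.
Set Implicit Arguments.
Unset Strict Implicit.
Unset Printing Implicit Defensive.
Lemma argmin_ex (R : realDomainType) K (F : 'I_K -> R) : (0 < K)%N -> exists j, forall k, F j <= F k.
Proof.
move=> K0.
case: (@Order.TotalTheory.arg_minP _ R _ (Ordinal K0) xpredT F isT) => j _ H.
by exists j => k; apply: H.
Qed.

Section Alg.
Variable R : rcfType.
Variable K : nat.
Implicit Types (G : 'I_K -> 'I_K -> R) (a w p : 'I_K -> R).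

Lemma minratio G a w p j :
  (forall k l, 0 <= G k l) -> (forall k, 0 < p k) ->
  (forall k, w j / p j <= w k / p k) ->
  a j * w j - \sum_l G j l * w l <= w j / p j * (a j * p j - \sum_l G j l * p l).
Proof.
move=> G0 p0 H; rewrite mulrBr.
have pj : p j != 0 by rewrite gt_eqF.
have -> : w j / p j * (a j * p j) = a j * w j by field.
rewrite lerD2l lerN2 mulr_sumr; apply: ler_sum => l _.
rewrite mulrCA; apply: ler_wpM2l => //.
by have := H l; rewrite ler_pdivlMr.
Qed.

Lemma key_lower G a u w eps : (0 < K)%N -> (forall k l, 0 <= G k l) ->
  (forall k, 0 < u k) -> 0 < eps ->
  (forall k, a k * u k - \sum_l G k l * u l = eps) ->
  exists j, forall k, (a j * w j - \sum_l G j l * w l) / eps * u k <= w k.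
Proof.
move=> K0 G0 u0 e0 Hu.
have [j Hj] := argmin_ex (fun k => w k / u k) K0.
exists j => k.
have H1 := minratio a G0 u0 Hj; rewrite Hu in H1.
have H2 : (a j * w j - \sum_l G j l * w l) / eps <= w j / u j.
  by rewrite ler_pdivrMr.
apply: (le_trans (ler_wpM2r (ltW (u0 k)) H2)).
by have := Hj k; rewrite ler_pdivlMr.
Qed.

Lemma key_upper G a p x d : (0 < K)%N -> (forall k l, 0 <= G k l) ->
  (forall k, 0 < p k) -> (forall k, 0 <= x k) ->
  (forall k, 1 <= a k * p k - \sum_l G k l * p l) ->
  (forall k, a k * x k - \sum_l G k l * x l <= d) ->
  forall k, x k <= d * p k.
Proof.
move=> K0 G0 p0 x0 Hp Hx.
have [j Hj] := argmin_ex (fun k => - x k / p k) K0.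
have H1 := minratio a (w := fun k => - x k) G0 p0 Hj.
simpl in H1.
have E : a j * - x j - \sum_l G j l * - x l = - (a j * x j - \sum_l G j l * x l).
  by rewrite mulrN; under eq_bigr do rewrite mulrN; rewrite sumrN opprD opprK.
move=> k.
have t0 : 0 <= x j / p j by rewrite divr_ge0 // ltW.
have H3 : x j / p j <= d.
  apply: (le_trans _ (Hx j)); rewrite -lerN2 -E.
  apply: (le_trans H1); rewrite !mulNr lerN2.
  by rewrite -{1}[x j / p j]mulr1 ler_wpM2l.
have := Hj k; rewrite !mulNr lerN2 => H4.
have : x k / p k <= d := le_trans H4 H3.
by rewrite ler_pdivrMr // mulrC.
Qed.
End Alg.
Section GM.
Variable R : rcfType.
Variable K : nat.

Lemma amgm_term (s v y : R) : 0 < s -> 0 <= v -> 0 <= y ->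
  Num.sqrt (v * y) <= (s * v + y / s) / 2.
Proof.
move=> s0 v0 y0.
rewrite sqrtrM //.
set P := Num.sqrt v; set Y := Num.sqrt y.
have -> : v = P ^+ 2 by rewrite sqr_sqrtr.
have -> : y = Y ^+ 2 by rewrite sqr_sqrtr.
rewrite ler_pdivlMr // -subr_ge0.
have -> : (s * P ^+ 2 + Y ^+ 2 / s) - P * Y * 2 = (s * P - Y) ^+ 2 / s.
  by field; rewrite gt_eqF.
by rewrite divr_ge0 ?sqr_ge0 // ltW.
Qed.

Lemma gm_super (G : 'I_K -> 'I_K -> R) (a b v y : 'I_K -> R) k :
  (forall k l, 0 <= G k l) -> (forall l, 0 < v l) -> (forall l, 0 < y l) ->
  0 < a k -> 0 < b k ->
  v k / a k ^+ 2 - \sum_l G k l * v l = 1 ->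
  y k / b k ^+ 2 - \sum_l G k l * y l = 1 ->
  1 <= Num.sqrt (v k * y k) / (a k * b k) - \sum_l G k l * Num.sqrt (v l * y l).
Proof.
move=> G0 v0 y0 a0 b0 Hv Hy.
set A := \sum_l G k l * v l in Hv.
set B := \sum_l G k l * y l in Hy.
have A0 : 0 <= A by apply: sumr_ge0 => l _; rewrite mulr_ge0 // ltW.
have B0 : 0 <= B by apply: sumr_ge0 => l _; rewrite mulr_ge0 // ltW.
set al := Num.sqrt (1 + A); set be := Num.sqrt (1 + B).
have al0 : 0 < al by rewrite sqrtr_gt0; lra.
have be0 : 0 < be by rewrite sqrtr_gt0; lra.
have alE : al ^+ 2 = 1 + A by rewrite sqr_sqrtr //; lra.
have beE : be ^+ 2 = 1 + B by rewrite sqr_sqrtr //; lra.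
have vk : v k = a k ^+ 2 * al ^+ 2.
  rewrite alE -Hv; field; rewrite gt_eqF //.
have yk : y k = b k ^+ 2 * be ^+ 2.
  rewrite beE -Hy; field; rewrite gt_eqF //.
have -> : Num.sqrt (v k * y k) / (a k * b k) = al * be.
  rewrite vk yk -exprMn -exprMn -exprMn sqrtr_sqr ger0_norm; last first.
    by rewrite !mulr_ge0 // ltW.
  field; rewrite ?gt_eqF //.
set s := be / al.
have s0 : 0 < s by rewrite divr_gt0.
have H1 : \sum_l G k l * Num.sqrt (v l * y l) <= (s * A + B / s) / 2.
  have -> : (s * A + B / s) / 2 = \sum_l G k l * ((s * v l + y l / s) / 2).
    rewrite (eq_bigr (fun l => s / 2 * (G k l * v l) + (2 * s)^-1 * (G k l * y l))); last first.
      by move=> l _; field; rewrite gt_eqF.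
    rewrite big_split /= -!mulr_sumr -/A -/B.
    by field; rewrite gt_eqF.
  apply: ler_sum => l _; apply: ler_wpM2l => //.
  by apply: amgm_term => //; apply: ltW.
rewrite -subr_ge0.
have E : al * be - (s * A + B / s) / 2 - 1 = (al - be) ^+ 2 / (2 * al * be).
  rewrite /s -[A](addKr 1) -[B](addKr 1) -alE -beE.
  by field; rewrite ?gt_eqF.
have : 0 <= al * be - (s * A + B / s) / 2 - 1.
  by rewrite E divr_ge0 ?sqr_ge0 // !mulr_ge0 // ltW.
lra.
Qed.
End GM.
Section Meas.
Local Open Scope classical_set_scope.
Variable R : realType.
Variable mu : probability R R.

Lemma negl_cover (f : R -> set R) (s : seq R) :
  (forall i, i \in s -> mu.-negligible (f i)) ->
  mu.-negligible (\bigcup_(i in [set x | x \in s]) f i).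
Proof.
elim: s => [|a s IH] H.
  by apply: (negligibleS _ (negligible_set0 mu)) => x [k0] /=; rewrite in_nil.
have -> : \bigcup_(i in [set x | x \in a :: s]) f i =
   f a `|` \bigcup_(i in [set x | x \in s]) f i.
  apply/seteqP; split => x.
    move=> [k0] /=; rewrite in_cons => /orP[/eqP ->|hs] fx; first by left.
    by right; exists k0.
  move=> [fx|[k0 /= hs fx]]; first by exists a => //=; rewrite mem_head.
  by exists k0 => //=; rewrite in_cons hs orbT.
apply: negligibleU; first by apply: H; rewrite mem_head.
by apply: IH => i hs; apply: H; rewrite in_cons hs orbT.
Qed.

Lemma null_ball lam : ~ closure (msupport mu) lam ->
  exists2 r : R, 0 < r & mu.-negligible (ball lam r).
Proof.
move=> /existsNP [B] /not_implyP [nB] /set0P /negP; rewrite negbK => /eqP AB.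
have [r r0 rB] := (nbhs_ballP _ _).1 nB.
have {}r0 : 0 < r := r0.
have Hx : forall x, exists e : R, 0 < e /\ (ball lam r x -> mu (ball x e) = 0%E).
  move=> x; case: (pselect (ball lam r x)) => bx; last by exists 1; split.
  have nsx : ~ msupport mu x.
    move=> sx; have : (msupport mu `&` B) x by split => //; apply: rB.
    by rewrite AB.
  move: nsx => /existsNP [e] /not_implyP [e0 He].
  exists e; split => // _.
  apply/eqP; rewrite eq_le measure_ge0 andbT.
  by rewrite leNgt; apply/negP.
have [E HE] := choice Hx.
exists (r / 2); first by rewrite divr_gt0.
have cpt := @segment_compact R (lam - r / 2) (lam + r / 2).
rewrite compact_cover in cpt.
have := cpt R `[lam - r / 2, lam + r / 2]%classic (fun x => ball x (E x)).
case.
- by move=> i _; apply: ball_open.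
- move=> x Dx; exists x => //; apply: ballxx; exact: (HE x).1.
move=> D' D'sub cov.
apply: (negligibleS _ (negl_cover (f := fun x => ball x (E x)) (s := finmap.enum_fset D') _)).
  move=> x bx; have : `[lam - r / 2, lam + r / 2]%classic x.
    move: bx; rewrite ball_itv /= !in_itv /= => /andP[h1 h2].
    by rewrite !ltW.
  by move/cov => [k0 Di bi]; exists k0.
move=> i iD.
have Di := D'sub i iD.
have bi : ball lam r i.
  move: Di; rewrite inE /= in_itv /= => /andP[h1 h2].
  rewrite ball_itv /= in_itv /=; apply/andP; split; lra.
have mb : measurable (ball i (E i)) := measurable_realfun.open_measurable (ball_open _ _).
by apply/(negligibleP _ mb); exact: (HE i).2.
Qed.
End Meas.
Section Integ.
Variable R : realType.
Variable mu : probability R R.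

Lemma cont_f (a b c : R) : b != 0 -> continuous (fun x : R => c * ((a - x) ^+ 2 + b ^+ 2)^-1).
Proof.
move=> b0 x.
have cid : {for x, continuous (fun y : R => a - y)}.
  apply: (@continuousB _ _ _ (fun=> a) (fun y => y)); first exact: cst_continuous.
  exact: cvg_id.
apply: (@continuousM _ _ (fun=> c) (fun y => ((a - y) ^+ 2 + b ^+ 2)^-1)).
  exact: cst_continuous.
apply: (@continuousV _ _ (fun y => ((a - y) ^+ 2 + b ^+ 2))).
  rewrite gt_eqF // ltr_pwDr ?sqr_ge0 //.
  by rewrite exprn_even_gt0 //.
apply: (@continuousD _ _ _ (fun y => (a - y) ^+ 2) (fun=> b ^+ 2)); last exact: cst_continuous.
rewrite /GRing.exp /=.
exact: (@continuousM _ _ (fun y => a - y) (fun y => a - y)).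
Qed.
End Integ.
Section Integ2.
Variable R : realType.
Variable mu : probability R R.
Local Open Scope classical_set_scope.

Lemma im_bound lam : ~ closure (msupport mu) lam ->
  exists2 d : R, 0 < d & forall z : R[i], complex.Im z < 0 ->
    `|complex.Re z - lam| < d -> complex.Im (stieltjes mu z) <= - complex.Im z / d ^+ 2.
Proof.
move=> nc; have [r r0 nb] := null_ball nc.
exists (r / 2); first by rewrite divr_gt0.
move=> [a b] /= b0 hd.
set c := - b / (r / 2) ^+ 2.
have c0 : 0 <= c by rewrite divr_ge0 ?sqr_ge0 //; lra.
have fE : (fun x : R => complex.Im ((a +i* b - x%:C)^-1)) =
          (fun x => (- b) * ((a - x) ^+ 2 + b ^+ 2)^-1).
  apply/funext => x /=; rewrite subr0 mulNr. done.
rewrite fE /Rintegral.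
set f := (fun x : R => (- b) * ((a - x) ^+ 2 + b ^+ 2)^-1).
have f0 : forall x, 0 <= f x.
  move=> x; rewrite /f mulr_ge0 // ?invr_ge0; first lra.
  by rewrite addr_ge0 ?sqr_ge0.
have mf : measurable_fun setT f.
  apply: measurable_realfun.continuous_measurable_fun; apply: cont_f; lra.
have H : (\int[mu]_(x in setT) (f x)%:E <= c%:E)%E.
  apply: (@le_trans _ _ (\int[mu]_(x in setT) (cst c%:E) x)%E).
    apply: ae_ge0_le_integral => //.
    - by move=> x _; rewrite lee_fin.
    - by apply/measurable_realfun.measurable_EFinP.
    - apply: (negligibleS _ nb) => x /= nP.
      apply: contrapT => nbx; apply: nP => _ /=; rewrite lee_fin.
      move: nbx; rewrite ball_itv /= in_itv /= => /negP; rewrite negb_and -!leNgt => hx.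
      have hax : r / 2 <= `|a - x|.
        move: hd; rewrite ltr_norml => /andP[hd1 hd2].
        case/orP: hx => hx.
          rewrite ger0_norm; lra.
        rewrite ler0_norm; lra.
      rewrite /f /c ler_pM2l; last lra.
      have h1 : 0 < (r / 2) ^+ 2 by rewrite exprn_gt0 // divr_gt0.
      have h2 : (r / 2) ^+ 2 <= (a - x) ^+ 2 + b ^+ 2.
        have h4 : (r / 2) ^+ 2 <= (a - x) ^+ 2.
          rewrite -[(a - x) ^+ 2]real_normK ?num_real //.
          by rewrite lerXn2r // ?nnegrE ?ltW ?divr_gt0.
        have := sqr_ge0 b; lra.
      have h3 : 0 < (a - x) ^+ 2 + b ^+ 2 := lt_le_trans h1 h2.
      by rewrite lef_pV2 ?posrE.
  rewrite integral_cst //; set m := (X in (_ * X)%E).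
  have -> : m = 1%E by exact: probability_setT.
  by rewrite mule1.
have H0 : (0 <= \int[mu]_(x in setT) (f x)%:E)%E.
  by apply: integral_ge0 => x _; rewrite lee_fin.
move: H H0; by case: (\int[mu]_(x in setT) (f x)%:E)%E => [t| |] //=.
Qed.
End Integ2.
Section Cplx.
Variable R : rcfType.
Local Notation normc := (@ComplexField.Normc.normc R).

Lemma Im_add (x y : R[i]) : complex.Im (x + y) = complex.Im x + complex.Im y.
Proof. by case: x; case: y. Qed.

Lemma Im_sum (I : Type) (r : seq I) (P : pred I) (F : I -> R[i]) :
  complex.Im (\sum_(i <- r | P i) F i) = \sum_(i <- r | P i) complex.Im (F i).
Proof. exact: (big_morph _ Im_add). Qed.

Lemma Im_rmul (r : R) (x : R[i]) : complex.Im (r%:C * x) = r * complex.Im x.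
Proof. by case: x => a b /=; rewrite mul0r addr0. Qed.

Lemma Im_opp (x : R[i]) : complex.Im (- x) = - complex.Im x.
Proof. by case: x. Qed.

Lemma Im_sub1 (x : R[i]) : complex.Im (x - 1) = complex.Im x.
Proof. by case: x => a b /=; rewrite subr0. Qed.

Lemma normc_real (r : R) : normc r%:C = `|r|.
Proof. by rewrite /ComplexField.Normc.normc /= expr0n /= addr0 sqrtr_sqr. Qed.

Lemma normc_ge0 (x : R[i]) : 0 <= normc x.
Proof. by case: x => a b; rewrite /ComplexField.Normc.normc sqrtr_ge0. Qed.

Lemma normc_sum n (F : 'I_n -> R[i]) : normc (\sum_l F l) <= \sum_l normc (F l).
Proof.
elim/big_ind2: _ => //.
  by rewrite ComplexField.Normc.normc0.
by move=> x1 y1 x2 y2 h1 h2; apply: (le_trans (le_normcD _ _)); apply: lerD.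
Qed.

Lemma normc_sub (x y : R[i]) : normc (x - y) = normc (y - x).
Proof. by rewrite -normcN opprB. Qed.

Lemma Im_eq n (G : 'I_n -> 'I_n -> R) (z : R[i]) (g : 'I_n -> R[i]) k :
  g k != 0 -> 1 = z * g k - g k * \sum_l (G k l)%:C * (g l - 1) ->
  complex.Im (g k) / (complex.Re (g k) ^+ 2 + complex.Im (g k) ^+ 2)
    - \sum_l G k l * complex.Im (g l) = - complex.Im z.
Proof.
move=> g0 E.
set c := \sum_l (G k l)%:C * (g l - 1) in E.
have E2 : (g k)^-1 = z - c.
  have E' : 1 = g k * (z - c) by rewrite E mulrBr [z * _]mulrC.
  by rewrite -[LHS]mulr1 E' mulKf.
have := congr1 (@complex.Im R) E2.
rewrite Im_add /c -sumrN Im_sum.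
under eq_bigr do rewrite -mulrN Im_rmul Im_opp Im_sub1 mulrN.
rewrite sumrN.
case: (g k) => a b /=.
move=> H; lra.
Qed.

Lemma diff_bound n (G : 'I_n -> 'I_n -> R) (z : R[i]) (lam : R)
    (g : 'I_n -> R[i]) (h : 'I_n -> R) k :
  (forall l, 0 <= G k l) ->
  1 = z * g k - g k * \sum_l (G k l)%:C * (g l - 1) ->
  1 = lam * h k - h k * \sum_l G k l * (h l - 1) ->
  normc (g k - (h k)%:C) <= normc (g k) * `|h k| *
     (normc (z - lam%:C) + \sum_l G k l * normc (g l - (h l)%:C)).
Proof.
move=> G0 Eg Eh.
have EhC : 1 = lam%:C * (h k)%:C - (h k)%:C * \sum_l (G k l)%:C * ((h l)%:C - 1).
  transitivity ((lam * h k - h k * \sum_l G k l * (h l - 1))%:C).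
    by rewrite -Eh.
  rewrite rmorphB !rmorphM rmorph_sum; congr (_ - _ * _); apply: eq_bigr => l _.
  by rewrite rmorphM rmorphB rmorph1.
set c := \sum_l (G k l)%:C * (g l - 1) in Eg.
set d := \sum_l (G k l)%:C * ((h l)%:C - 1) in EhC.
have Ecd : \sum_l (G k l)%:C * (g l - (h l)%:C) = c - d.
  rewrite /c /d -sumrB; apply: eq_bigr => l _; rewrite -mulrBr; congr (_ * _).
  by rewrite opprB addrA subrK.
have key : g k - (h k)%:C = g k * (h k)%:C * ((lam%:C - z) + \sum_l (G k l)%:C * (g l - (h l)%:C)).
  rewrite Ecd.
  have e1 : (h k)%:C * (lam%:C - d) = 1 by rewrite EhC; ring.
  have e2 : g k * (z - c) = 1 by rewrite Eg; ring.
  transitivity (g k * ((h k)%:C * (lam%:C - d)) - (h k)%:C * (g k * (z - c))).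
    by rewrite e1 e2 !mulr1.
  ring.
rewrite key !ComplexField.Normc.normcM normc_real.
apply: ler_wpM2l; first by rewrite mulr_ge0 ?normc_ge0.
apply: (le_trans (le_normcD _ _)); rewrite normc_sub; apply: lerD => //.
apply: (le_trans (normc_sum _)); apply: ler_sum => l _.
by rewrite ComplexField.Normc.normcM normc_real ger0_norm.
Qed.
End Cplx.
Section Mx.
Variable F : fieldType.

Lemma QVE_entry n (G : 'M[F]_n) z g : QVE G z g ->
  forall k, 1 = z * g k 0 - g k 0 * \sum_l G k l * (g l 0 - 1).
Proof.
move=> H k; have := congr1 (fun M : 'cV_n => M k 0) H; rewrite !mxE => E.
rewrite {1}E.
congr (_ - _ * _); apply: eq_bigr => l _; by rewrite !mxE.
Qed.

Lemma M_entry n (gt : 'cV[F]_n) (G : 'M[F]_n) (w : 'cV[F]_n) k :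
  ((diag_mx (map_mx (fun x => x ^- 2) gt^T) - G) *m w) k 0
    = (gt k 0 ^+ 2)^-1 * w k 0 - \sum_l G k l * w l 0.
Proof. by rewrite mulmxBl mul_diag_mx !mxE. Qed.

Lemma unit_of_inj n (M : 'M[F]_n) :
  (forall w : 'cV_n, M *m w = 0 -> w = 0) -> M \in unitmx.
Proof.
move=> H; rewrite unitmxE unitfE -det_tr.
apply/det0P => -[v v0 vM]; move/eqP: v0; apply.
have : M *m v^T = 0.
  by apply: trmx_inj; rewrite trmx_mul trmxK vM trmx0.
by move/H => /(congr1 trmx); rewrite trmxK trmx0.
Qed.
End Mx.

Lemma cmx_entry (R : rcfType) m n (A : 'M[R]_(m, n)) i j : cmx A i j = (A i j)%:C.
Proof. by rewrite /cmx mxE. Qed.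

Lemma Gam_entry (R : pzRingType) K (S : 'M[R]_K) (rho : 'rV[R]_K) k l :
  GammaK S rho k l = S k l * rho 0 l.
Proof. by rewrite /GammaK mul_mx_diag mxE. Qed.

Lemma inv_sq_close (R : realFieldType) (N A m e eta : R) : 0 < m -> m <= A ->
  0 <= N -> `|N - A| < e -> e <= m / 2 -> e <= eta * m ^+ 3 / 24 ->
  `|(N ^+ 2)^-1 - (A ^+ 2)^-1| < eta.
Proof.
move=> m0 mA N0 hNA em eeta.
have A0 : 0 < A by apply: lt_le_trans mA.
move: hNA; rewrite ltr_norml => /andP[h1 h2].
have NA : A / 2 <= N by lra.
have N0' : 0 < N by lra.
have eta0 : 0 < eta.
  have e0 : 0 < e by lra.
  have : 0 < eta * m ^+ 3 / 24 by lra.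
  by rewrite !pmulr_lgt0 // ?exprn_gt0 // invr_gt0.
have E : (N ^+ 2)^-1 - (A ^+ 2)^-1 = (A - N) * ((A + N) / (N ^+ 2 * A ^+ 2)).
  by field; rewrite !gt_eqF.
rewrite E normrM [X in _ * X]ger0_norm; last by rewrite divr_ge0 ?mulr_ge0 ?sqr_ge0 //; lra.
rewrite mulrA ltr_pdivrMr; last by rewrite mulr_gt0 ?exprn_gt0.
have h3 : `|A - N| * (A + N) <= e * (3 * A).
  apply: ler_pM; first exact: normr_ge0.
  - lra.
  - by rewrite distrC ltW // ltr_norml; apply/andP; split; lra.
  - lra.
apply: (le_lt_trans h3).
have h4 : (A / 2) ^+ 2 <= N ^+ 2.
  by rewrite lerXn2r // ?nnegrE; lra.
have h5 : eta * ((A / 2) ^+ 2 * A ^+ 2) <= eta * (N ^+ 2 * A ^+ 2).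
  by rewrite ler_pM2l // ler_pM2r // exprn_gt0.
apply: (lt_le_trans _ h5).
have h6 : m ^+ 3 <= A ^+ 3 by rewrite lerXn2r // ?nnegrE; lra.
have h7 : e * (3 * A) <= eta * A ^+ 4 / 8.
  have h9 : e * (3 * A) <= (eta * m ^+ 3 / 24) * (3 * A) by rewrite ler_pM2r //; lra.
  have h8 : eta * m ^+ 3 * A <= eta * A ^+ 3 * A by rewrite ler_pM2r // ler_pM2l.
  have h10 : eta * A ^+ 3 * A = eta * A ^+ 4 by rewrite -mulrA -exprSr.
  lra.
apply: (le_lt_trans h7).
rewrite !exprS expr0 !mulr1.
have : 0 < eta * (A * (A * (A * A))) by rewrite !mulr_gt0.
nra.
Qed.
Section Misc.
Variable R : rcfType.
Local Notation normc := (@ComplexField.Normc.normc R).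

Lemma normc_sqr (x : R[i]) : normc x ^+ 2 = complex.Re x ^+ 2 + complex.Im x ^+ 2.
Proof. by case: x => a b; rewrite /ComplexField.Normc.normc sqr_sqrtr // addr_ge0 ?sqr_ge0. Qed.

Lemma Re_le_normc (x : R[i]) : `|complex.Re x| <= normc x.
Proof.
case: x => a b /=; rewrite /ComplexField.Normc.normc -sqrtr_sqr.
by apply: ler_wsqrtr; rewrite lerDl sqr_ge0.
Qed.

Lemma normc_rev (x : R[i]) (r : R) : `|normc x - `|r| | <= normc (x - r%:C).
Proof.
rewrite ler_norml; apply/andP; split.
  have := le_normcD (r%:C - x) x; rewrite subrK normc_real normc_sub; lra.
have := le_normcD (x - r%:C) (r%:C); rewrite subrK normc_real; lra.
Qed.

Lemma le_sum_term n (F : 'I_n -> R) j : (forall i, 0 <= F i) -> F j <= \sum_i F i.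
Proof. by move=> F0; rewrite (bigD1 j) //= lerDl sumr_ge0. Qed.

Lemma ge0_of_eps (x : R) : (forall t, 0 < t -> - t <= x) -> 0 <= x.
Proof.
move=> H; rewrite leNgt; apply/negP => x0.
have := H (- x / 2); rewrite divr_gt0 // ?oppr_gt0 // => /(_ isT); lra.
Qed.
End Misc.

Unset Implicit Arguments.

Theorem mainTheorem2 (R : realType) (K : nat) (rho : 'rV[R]_K) (S : 'M[R]_K)
  (mu : probability R R) (g : R[i] -> 'cV[R[i]]_K)
  (lam : R) (gt : 'cV[R]_K) :
  (0 < K)%N ->
  (forall k, 0 < rho 0 k < 1) ->
  \sum_(k < K) rho 0 k = 1 ->
  S^T = S ->
  (forall k l, 0 < S k l) ->
  (forall z : R[i], complex.Im z < 0 ->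
     (forall k, 0 < complex.Im (g z k 0)) /\
     QVE (cmx (GammaK S rho)) z (g z)) ->
  (forall z : R[i], complex.Im z < 0 ->
     \sum_(k < K) (rho 0 k)%:C * g z k 0 = stieltjes mu z) ->
  ~ closure (msupport mu) lam ->
  (forall k, gt k 0 != 0) ->
  QVE (GammaK S rho) lam gt ->
  lim_lower g lam (cmx gt)
  <->
  exists y : 'cV[R]_K,
    [/\ (diag_mx (map_mx (fun x => x ^- 2) gt^T) - GammaK S rho) *m y
          = const_mx 1,
        (forall y' : 'cV[R]_K,
           (diag_mx (map_mx (fun x => x ^- 2) gt^T) - GammaK S rho) *m y'
             = const_mx 1 -> y' = y)
      & forall k, 0 < y k 0].
Proof.
move=> K0 rho01 rhosum Ssym Spos Hg Hst nc gt0 Hqve.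
set Gam := GammaK S rho.
have rho0 : forall k, 0 < rho 0 k by move=> k; case/andP: (rho01 k).
have G0 : forall k l, 0 <= Gam k l.
  by move=> k l; rewrite /Gam Gam_entry mulr_ge0 // ltW.
have Eh := QVE_entry Hqve.
have Eg : forall z, complex.Im z < 0 -> forall k,
   1 = z * g z k 0 - g z k 0 * \sum_l (Gam k l)%:C * (g z l 0 - 1).
  move=> z hz k; have E := QVE_entry (Hg z hz).2 k.
  rewrite {1}E; congr (_ - _ * _); apply: eq_bigr => l _.
  by rewrite cmx_entry.
have Img : forall z, complex.Im z < 0 -> forall k, 0 < complex.Im (g z k 0).
  by move=> z hz k; exact: ((Hg z hz).1 k).
have gnz : forall z, complex.Im z < 0 -> forall k, g z k 0 != 0.
  by move=> z hz k; apply/eqP => h; have := Img z hz k; rewrite h /= ltxx.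
have ImE : forall z, complex.Im z < 0 -> forall k,
  complex.Im (g z k 0) / (complex.Re (g z k 0) ^+ 2 + complex.Im (g z k 0) ^+ 2)
   - \sum_l Gam k l * complex.Im (g z l 0) = - complex.Im z.
  move=> z hz k; exact: (Im_eq (g := fun l => g z l 0) (gnz z hz k) (Eg z hz k)).
have [d0 d00 Hd0] := im_bound nc.
have Hv : forall z, complex.Im z < 0 -> `|complex.Re z - lam| < d0 -> forall k,
   complex.Im (g z k 0) / (- complex.Im z) <= (rho 0 k * d0 ^+ 2)^-1.
  move=> z hz hd k.
  have hs := Hd0 z hz hd.
  rewrite -(Hst z hz) Im_sum in hs.
  rewrite (eq_bigr (fun l => rho 0 l * complex.Im (g z l 0))) in hs; last first.
    by move=> l _; rewrite Im_rmul.
  have hk : rho 0 k * complex.Im (g z k 0) <= \sum_l rho 0 l * complex.Im (g z l 0).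
    apply: (le_sum_term (F := fun l => rho 0 l * complex.Im (g z l 0))) => l.
    by rewrite mulr_ge0 // ltW // Img.
  have ep : 0 < - complex.Im z by rewrite oppr_gt0.
  have h1 := le_trans hk hs.
  rewrite ler_pdivrMr //.
  have -> : (rho 0 k * d0 ^+ 2)^-1 * - complex.Im z = (- complex.Im z / d0 ^+ 2) / rho 0 k.
    by field; rewrite ?gt_eqF.
  by rewrite ler_pdivlMr // mulrC.
split; last first.
  move=> [y [My _ ypos]] e e0.
  have Ey : forall k, y k 0 / `|gt k 0| ^+ 2 - \sum_l Gam k l * y l 0 = 1.
    move=> k; have := congr1 (fun M : 'cV_K => M k 0) My.
    by rewrite M_entry mxE real_normK ?num_real // mulrC.
  set C := \sum_k Num.sqrt (y k 0 / (rho 0 k * d0 ^+ 2)).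
  have C0 : 0 <= C by apply: sumr_ge0 => k _; exact: sqrtr_ge0.
  exists (Num.min d0 (e / (C + 1))).
    by rewrite lt_min d00 divr_gt0 //; lra.
  move=> z hz; rewrite lt_min => /andP[hzd1 hzd2] k.
  rewrite cmx_entry.
  set dl := ComplexField.Normc.normc (z - lam%:C) in hzd1 hzd2 *.
  have dl0 : 0 <= dl by apply: normc_ge0.
  have hre : `|complex.Re z - lam| < d0.
    apply: le_lt_trans hzd1; rewrite /dl.
    have -> : complex.Re z - lam = complex.Re (z - lam%:C) by case: (z) => a b.
    exact: Re_le_normc.
  set eps := - complex.Im z.
  have eps0 : 0 < eps by rewrite oppr_gt0.
  set v := fun l => complex.Im (g z l 0) / eps.
  set n := fun l => ComplexField.Normc.normc (g z l 0).
  have v0 : forall l, 0 < v l by move=> l; rewrite divr_gt0 // Img.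
  have n0 : forall l, 0 < n l.
    move=> l; rewrite lt_neqAle normc_ge0 andbT eq_sym; apply/eqP => h.
    by move/eqP: (gnz z hz l); apply; apply: ComplexField.Normc.eq0_normc.
  have ev : forall l, v l / n l ^+ 2 - \sum_m Gam l m * v m = 1.
    move=> l; rewrite /n normc_sqr.
    have -> : v l / (complex.Re (g z l 0) ^+ 2 + complex.Im (g z l 0) ^+ 2) -
       \sum_m Gam l m * v m =
       (complex.Im (g z l 0) / (complex.Re (g z l 0) ^+ 2 + complex.Im (g z l 0) ^+ 2) -
        \sum_m Gam l m * complex.Im (g z m 0)) / eps.
      rewrite mulrBl mulr_suml; congr (_ - _); first by rewrite /v mulrAC.
      by apply: eq_bigr => m _; rewrite /v mulrA.
    by rewrite ImE // divff // gt_eqF.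
  have gtn0 : forall l, 0 < `|gt l 0| by move=> l; rewrite normr_gt0.
  set p := fun l => Num.sqrt (v l * y l 0).
  have p0 : forall l, 0 < p l by move=> l; rewrite sqrtr_gt0 mulr_gt0.
  have Hp : forall l, 1 <= (n l * `|gt l 0|)^-1 * p l - \sum_m Gam l m * p m.
    move=> l; rewrite mulrC.
    exact: (gm_super (a := n) (b := fun l => `|gt l 0|) (v := v) (y := fun l => y l 0)
             G0 v0 ypos (n0 l) (gtn0 l) (ev l) (Ey l)).
  set x := fun l => ComplexField.Normc.normc (g z l 0 - (gt l 0)%:C).
  have Hx : forall l, (n l * `|gt l 0|)^-1 * x l - \sum_m Gam l m * x m <= dl.
    move=> l.
    have hd := diff_bound (G := Gam) (g := fun m => g z m 0) (h := fun m => gt m 0)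
               (G0 l) (Eg z hz l) (Eh l).
    rewrite -/dl -/(x l) in hd.
    have hd' : (n l * `|gt l 0|)^-1 * x l <= dl + \sum_m Gam l m * x m.
      by rewrite ler_pdivrMl ?mulr_gt0 //.
    lra.
  have xb := key_upper K0 G0 p0 (fun l => normc_ge0 _) Hp Hx k.
  have pk : p k <= C.
    apply: le_trans (le_sum_term (F := fun k => Num.sqrt (y k 0 / (rho 0 k * d0 ^+ 2))) k _);
      last by move=> i; exact: sqrtr_ge0.
    apply: ler_wsqrtr.
    rewrite [v k * _]mulrC; apply: ler_wpM2l; first exact: ltW.
    exact: Hv.
  apply: (le_lt_trans xb).
  apply: (le_lt_trans (ler_wpM2l dl0 pk)).
  have h1 : dl * C <= e / (C + 1) * C by rewrite ler_wpM2r // ltW.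
  apply: (le_lt_trans h1).
  rewrite mulrAC ltr_pdivrMr; last lra.
  nra.

move=> Hlim.
set M := diag_mx (map_mx (fun x => x ^- 2) gt^T) - Gam.
set zz := fun eps : R => lam +i* (- eps).
have zzIm : forall eps, 0 < eps -> complex.Im (zz eps) < 0.
  by move=> eps e0; rewrite /zz /= oppr_lt0.
have zzRe : forall eps, `|complex.Re (zz eps) - lam| < d0.
  by move=> eps; rewrite /zz /= subrr normr0.
set n2 := fun z l => complex.Re (g z l 0) ^+ 2 + complex.Im (g z l 0) ^+ 2.
have Happ : forall eta, 0 < eta -> exists2 eps, 0 < eps &
    forall k, `|(n2 (zz eps) k)^-1 - (gt k 0 ^+ 2)^-1| < eta.
  move=> eta eta0.
  have [j Hj] := argmin_ex (fun k => `|gt k 0|) K0.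
  set m := `|gt j 0|.
  have m0 : 0 < m by rewrite normr_gt0.
  set e1 := Num.min (m / 2) (eta * m ^+ 3 / 24).
  have e10 : 0 < e1 by rewrite lt_min !divr_gt0 // ?mulr_gt0 // exprn_gt0.
  have [dl dl0 Hdl] := Hlim e1 e10.
  exists (dl / 2); first by rewrite divr_gt0.
  move=> k.
  have hz := zzIm (dl / 2) (divr_gt0 dl0 (ltr0Sn _ 1)).
  have hn : ComplexField.Normc.normc (zz (dl / 2) - lam%:C) < dl.
    rewrite /zz /ComplexField.Normc.normc /= subrr subr0 expr0n /= add0r sqrrN.
    by rewrite sqrtr_sqr ger0_norm ?divr_ge0 ?ltW //; lra.
  have := Hdl _ hz hn k; rewrite cmx_entry => hk.
  rewrite /n2 -normc_sqr -[gt k 0 ^+ 2]real_normK ?num_real //.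
  apply: (inv_sq_close (m := m) (e := e1)) => //.
  - exact: normc_ge0.
  - exact: (le_lt_trans (normc_rev _ _) hk).
  - by rewrite /e1 ge_min lexx.
  - by rewrite /e1 ge_min lexx orbT.
have Hu : forall eps, 0 < eps -> forall l,
    (n2 (zz eps) l)^-1 * complex.Im (g (zz eps) l 0)
      - \sum_m Gam l m * complex.Im (g (zz eps) m 0) = eps.
  move=> eps e0 l; rewrite mulrC.
  by have := ImE (zz eps) (zzIm eps e0) l; rewrite /zz /= opprK.
have inj : forall w : 'cV_K, M *m w = 0 -> w = 0.
  have pos : forall w : 'cV_K,
      (forall k, (gt k 0 ^+ 2)^-1 * w k 0 - \sum_l Gam k l * w l 0 = 0) ->
      forall k, 0 <= w k 0.
    move=> w Ew k0; apply: ge0_of_eps => t t0.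
    set W := \sum_k `|w k 0|.
    have W0 : 0 <= W by apply: sumr_ge0 => k _.
    set eta := t * (rho 0 k0 * d0 ^+ 2) / (W + 1).
    have eta0 : 0 < eta by rewrite /eta !mulr_gt0 ?invr_gt0 ?exprn_gt0 //; lra.
    have [eps e0 Heps] := Happ eta eta0.
    have [j Hj] := key_lower (fun l => w l 0) K0 G0 (Img _ (zzIm eps e0)) e0
                     (Hu eps e0).
    have := Hj k0.
    set h := (n2 (zz eps) j)^-1 * w j 0 - \sum_l Gam j l * w l 0.
    have hE : h = ((n2 (zz eps) j)^-1 - (gt j 0 ^+ 2)^-1) * w j 0.
      by rewrite /h mulrBl; have := Ew j; lra.
    have hb : `|h| <= eta * W.
      rewrite hE normrM; apply: ler_pM => //; first exact: ltW.
      exact: (le_sum_term (F := fun k => `|w k 0|)).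
    have hv := Hv _ (zzIm eps e0) (zzRe eps) k0.
    rewrite /zz /= opprK in hv.
    set u := complex.Im (g (zz eps) k0 0) in hv *.
    have u0 : 0 <= u by rewrite ltW // Img // zzIm.
    move=> hw; apply: le_trans hw.
    have -> : h / eps * u = h * (u / eps) by rewrite mulrAC -mulrA.
    have hh : - `|h| <= h by apply: lerNnormlW.
    have huv : 0 <= u / eps by rewrite divr_ge0 // ltW.
    apply: le_trans (ler_wpM2r huv hh).
    rewrite mulNr lerN2.
    apply: le_trans (ler_pM (normr_ge0 _) huv hb hv) _.
    rewrite /eta.
    have -> : t * (rho 0 k0 * d0 ^+ 2) / (W + 1) * W * (rho 0 k0 * d0 ^+ 2)^-1
              = t * (W / (W + 1)).
      by field; rewrite ?gt_eqF ?mulr_gt0 ?exprn_gt0 //; lra.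
    have hW : W / (W + 1) <= 1 by rewrite ler_pdivrMr; lra.
    by rewrite -[X in _ <= X]mulr1; apply: ler_wpM2l => //; exact: ltW.
  move=> w Mw.
  have Ew : forall k, (gt k 0 ^+ 2)^-1 * w k 0 - \sum_l Gam k l * w l 0 = 0.
    by move=> k; have := congr1 (fun A : 'cV_K => A k 0) Mw; rewrite M_entry mxE.
  have Ewn : forall k, (gt k 0 ^+ 2)^-1 * (- w) k 0 - \sum_l Gam k l * (- w) l 0 = 0.
    move=> k; rewrite [(- w) _ _]mxE; under eq_bigr do rewrite [(- w) _ _]mxE mulrN.
    by rewrite sumrN mulrN -opprD Ew oppr0.
  apply/matrixP => k j; rewrite (ord1 j) mxE.
  apply/eqP; rewrite eq_le pos //=.
  by rewrite andbT; have := pos _ Ewn k; rewrite [(- w) _ _]mxE oppr_ge0.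
have Mu : M \in unitmx := unit_of_inj inj.
exists (invmx M *m const_mx 1); split.
- by rewrite mulKVmx.
- by move=> y' Hy'; rewrite -Hy' mulKmx.
set y := invmx M *m const_mx 1.
have My : M *m y = const_mx 1 by rewrite mulKVmx.
have Ey : forall k, (gt k 0 ^+ 2)^-1 * y k 0 - \sum_l Gam k l * y l 0 = 1.
  by move=> k; have := congr1 (fun A : 'cV_K => A k 0) My; rewrite M_entry [const_mx _ _ _]mxE.
set W := \sum_k `|y k 0|.
have W0 : 0 <= W by apply: sumr_ge0 => k _.
set eta := (2 * (W + 1))^-1.
have eta0 : 0 < eta by rewrite invr_gt0; lra.
have [eps e0 Heps] := Happ eta eta0.
have [j Hj] := key_lower (fun l => y l 0) K0 G0 (Img _ (zzIm eps e0)) e0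
                 (Hu eps e0).
move=> k; have := Hj k.
set h := (n2 (zz eps) j)^-1 * y j 0 - \sum_l Gam j l * y l 0.
have hE : h = 1 + ((n2 (zz eps) j)^-1 - (gt j 0 ^+ 2)^-1) * y j 0.
  by rewrite /h mulrBl; have := Ey j; lra.
have hb : `|((n2 (zz eps) j)^-1 - (gt j 0 ^+ 2)^-1) * y j 0| <= eta * W.
  rewrite normrM; apply: ler_pM => //; first exact: ltW.
  exact: (le_sum_term (F := fun k => `|y k 0|)).
have h0 : 0 < h.
  have : eta * W < 1.
    rewrite /eta mulrC ltr_pdivrMr; lra.
  rewrite hE; move: hb; rewrite ler_norml => /andP[hb1 _]; lra.
move=> hy; apply: lt_le_trans hy.
by rewrite mulr_gt0 ?divr_gt0 // Img // zzIm.
Qed.
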